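(* For every finite graph $G$, $\mathrm{copw}_1(G)=\deg(G)+1$.
   Context: Graphs are finite, simple, undirected. The degeneracy $\deg(G)$ is the least $d$ such that there is a total order of $V(G)$ in which every vertex has at most $d$ neighbours preceding it. For $r\in\mathbb N\cup\{\infty\}$ and $k\ge 1$, the Cops and Robber game of radius $r$ and width $k$ on $G$ is played as follows. Let $S_0=\emptyset$; the robber chooses an initial vertex $v_0$. In round $i\ge1$ the cops announce a set $S_i\subseteq V(G)$ with $|S_i|\le k$ (their new positions); knowing $S_i$, the robber moves from $v_{i-1}$ to a vertex $v_i$ along a path of length at most $r$ (any length if $r=\infty$; length $0$ allowed) that contains no vertex of $S_{i-1}\cap S_i$ (the cops that remain on the ground). The cops win if $v_i\in S_i$ for some $i$; the robber wins if this never happens. The radius-$r$ cop-width $\mathrm{copw}_r(G)$ is the least $k$ such that the cops have a winning strategy in this game of radius $r$ and width $k$. *)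

(* Defs.v *)
From mathcomp Require Import all_boot.
Set Implicit Arguments. Unset Strict Implicit. Unset Printing Implicit Defensive.

Definition simple_graph (T : finType) (e : rel T) : Prop :=
  symmetric e /\ irreflexive e.

(* A total order of V(G) is given by a bijective ranking f : T -> 'I_#|T|
   (u precedes v iff f u < f v).  [degenerate_at e d]: some total order in
   which every vertex has at most d neighbours preceding it. *)
Definition degenerate_at (T : finType) (e : rel T) (d : nat) : bool :=
  [exists f : {ffun T -> 'I_#|T|},
     injectiveb f &&
     [forall v, #|[set u | e v u & f u < f v]| <= d]].

Lemma degenerate_at_exists (T : finType) (e : rel T) :
  exists d, degenerate_at e d.
Proof.
exists #|T|; apply/existsP; exists [ffun x => enum_rank x].
apply/andP; split.
  by apply/injectiveP => x y; rewrite !ffunE => /enum_rank_inj.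
by apply/forallP => v; apply: max_card.
Qed.

Definition degeneracy (T : finType) (e : rel T) : nat :=
  ex_minn (degenerate_at_exists e).

(* Radius: [Some r] for finite r, [None] for r = infinity. *)
Definition radius := option nat.

Definition short_path_avoiding (T : finType) (e : rel T) (r : radius)
    (X : {set T}) (x y : T) : Prop :=
  exists p : seq T,
    [/\ path e x p, last x p = y,
        (if r is Some n then size p <= n else true)
      & all (fun z => z \notin X) (x :: p)].

(* A cops' strategy maps the history of robber positions [v_0; ...; v_{i-1}]
   to the cops' new position S_i (round i >= 1).  The earlier cop positions
   are determined by the strategy applied to prefixes of the history. *)
Definition cop_strategy (T : finType) := seq T -> {set T}.

Definition cops_at (T : finType) (s : cop_strategy T) (v : nat -> T) (i : nat)
    : {set T} :=
  if i is 0 then set0 else s (mkseq v i).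

Definition legal_move (T : finType) (e : rel T) (r : radius)
    (s : cop_strategy T) (v : nat -> T) (i : nat) : Prop :=
  short_path_avoiding e r (cops_at s v i.-1 :&: cops_at s v i) (v i.-1) (v i).

Definition cops_winning_strategy (T : finType) (e : rel T) (r : radius)
    (k : nat) (s : cop_strategy T) : Prop :=
  (forall h, #|s h| <= k) /\
  forall v : nat -> T,
    (forall i, 0 < i -> legal_move e r s v i) ->
    exists2 i, 0 < i & v i \in cops_at s v i.

Definition cops_win (T : finType) (e : rel T) (r : radius) (k : nat) : Prop :=
  exists s : cop_strategy T, cops_winning_strategy e r k s.

Definition is_copw (T : finType) (e : rel T) (r : radius) (k : nat) : Prop :=
  [/\ 1 <= k, cops_win e r k
    & forall k', 1 <= k' -> cops_win e r k' -> k <= k'].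

(* Main.v *)
Require Import Defs.
From mathcomp Require Import all_boot zify.
Set Implicit Arguments. Unset Strict Implicit.

Lemma index_rcons_lt (T : eqType) (s : seq T) (x u y : T) : y \in s ->
  (index u (rcons s x) < index y (rcons s x)) = (index u s < index y s).
Proof.
move=> ys; rewrite -cats1 !index_cat ys.
case us: (u \in s) => //.
rewrite (memNindex (negbT us)).
have := index_mem y s; rewrite ys => h.
apply/idP/idP; lia.
Qed.

Lemma peel (T : finType) (e : rel T) (k : nat) : irreflexive e ->
  forall A : {set T},
  (exists B : {set T}, B != set0 /\ forall x, x \in B -> k <= #|[set u in B | e x u]|)
  \/ exists s : seq T, [/\ uniq s, forall x, (x \in s) = (x \in A) &
       forall x, x \in s -> #|[set u | e x u & index u s < index x s]| < k].
Proof.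
move=> irr A; have [n] := ubnP #|A|; elim: n A => // n IH A hA.
case A0: (A == set0).
  right; exists [::]; split => // x; by rewrite (eqP A0) in_set0.
case: (boolP [forall x in A, k <= #|[set u in A | e x u]|]) => [/forall_inP H|].
  by left; exists A; rewrite A0; split.
case/forall_inPn => x xA; rewrite -ltnNge => hx.
have hA' : #|A :\ x| < n by move: hA; rewrite (cardsD1 x A) xA; lia.
case: (IH _ hA') => [|[s [us ms bs]]]; first by left.
have xs : x \notin s by rewrite ms in_setD1 eqxx.
right; exists (rcons s x); split.
- by rewrite rcons_uniq xs us.
- move=> y; rewrite mem_rcons in_cons ms in_setD1.
  by case: (eqVneq y x) => [->|]; rewrite ?xA.
- move=> y; rewrite mem_rcons in_cons => /orP [/eqP ->|ys].
  + apply: leq_ltn_trans hx; apply: subset_leq_card; apply/subsetP => u.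
    rewrite !inE => /andP [eu hu]; rewrite eu andbT.
    have : u \in s.
      move: hu; rewrite -cats1 !index_cat (negbTE xs) /= eqxx addn0.
      by case: (u \in s) => //; lia.
    by rewrite ms in_setD1 => /andP [].
  + apply: leq_ltn_trans (bs y ys); rewrite leq_eqVlt; apply/orP; left.
    apply/eqP; apply: eq_card => u; rewrite !inE index_rcons_lt //.
Qed.

Lemma robber_wins (T : finType) (e : rel T) (k : nat) (B : {set T}) :
  irreflexive e -> B != set0 ->
  (forall x, x \in B -> k <= #|[set u in B | e x u]|) ->
  ~ cops_win e (Some 1) k.
Proof.
move=> irr B0 HB [s [hs win]].
case/set0Pn: B0 => b0 b0B.
pose nxt (S : {set T}) (x : T) :=
  if x \in S then odflt x [pick w | (w \in B) && e x w && (w \notin S)] else x.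
have nxtP : forall (S : {set T}) x, #|S| <= k -> x \in B -> x \in S ->
    [/\ nxt S x \in B, e x (nxt S x) & nxt S x \notin S].
  move=> S x hS xB xS; rewrite /nxt xS.
  case: pickP => [w /andP [/andP [wB ew] wS] | H] //=.
  exfalso.
  have sub : x |: [set u in B | e x u] \subset S.
    apply/subsetP => u; rewrite !inE => /orP [/eqP -> //| /andP [uB eu]].
    by move: (H u); rewrite uB eu /=; case: (u \in S).
  have := subset_leq_card sub; rewrite cardsU1 inE irr andbF /=.
  have := HB x xB; lia.
pose hist := fix hist i := if i is i'.+1 then
   rcons (hist i') (nxt (s (hist i')) (last b0 (hist i'))) else [:: b0].
pose v i := last b0 (hist i).
have histE : forall i, hist i = mkseq v i.+1.
  elim => [//|i IH]; rewrite mkseqS -IH /v /=; by rewrite last_rcons.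
have copsE : forall i, cops_at s v i.+1 = s (hist i) by move=> i; rewrite /= histE.
have vS : forall i, v i.+1 = nxt (s (hist i)) (v i) by move=> i; rewrite /v /= last_rcons.
have inv : forall i, v i \in B /\ v i \notin cops_at s v i.
  elim => [|i [vB vN]]; first by rewrite /= in_set0 /v /=.
  rewrite vS copsE.
  case: (boolP (v i \in s (hist i))) => vi.
    by case: (nxtP _ _ (hs _) vB vi).
  by rewrite /nxt (negbTE vi).
have: forall i, 0 < i -> legal_move e (Some 1) s v i.
  case => // i _; rewrite /legal_move /= -/(cops_at s v i.+1).
  have [vB vN] := inv i.
  rewrite vS copsE.
  case: (boolP (v i \in s (hist i))) => vi.
    case: (nxtP _ _ (hs _) vB vi) => _ ew wN.
    exists [:: nxt (s (hist i)) (v i)]; split => //=; first by rewrite ew.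
    by rewrite !in_setI (negbTE vN) (negbTE wN) andbF.
  exists [::]; split => //=; first by rewrite /nxt (negbTE vi).
  by rewrite !in_setI (negbTE vi) andbF.
move=> /win [i _ hi]; have [_ ] := inv i; by rewrite hi.
Qed.

Lemma cops_strategy (T : finType) (e : rel T) (d : nat) :
  irreflexive e -> degenerate_at e d -> cops_win e (Some 1) d.+1.
Proof.
move=> irr /existsP [f /andP [/injectiveP finj /forallP fd]].
pose C (x : T) := x |: [set u | e x u & f u < f x].
pose s (h : seq T) := if h is y :: h' then C (last y h') else set0.
have sE : forall l x, s (rcons l x) = C x.
  by move=> l x; case: l => [|y l] //=; rewrite last_rcons.
exists s; split.
  case => [|y h] /=; first by rewrite cards0.
  by rewrite /C cardsU1; have := fd (last y h); case: (_ \notin _) => /=; lia.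
move=> v legal.
have step : forall i, (exists2 j, 0 < j & v j \in cops_at s v j) \/ i <= f (v i).
  elim => [|i [H|IH]]; [by right| by left|].
  case: (boolP (v i.+1 \in cops_at s v i.+1)) => hc; first by left; exists i.+1.
  right; move: hc; rewrite /cops_at mkseqS sE.
  have [p [pp pl ps _]] := legal i.+1 isT.
  case: p pp pl ps => [|w [|? ?]] //=.
    by move=> _ <-; rewrite /C setU11.
  rewrite andbT => ew <- _; rewrite /C !inE ew /= negb_or => /andP [wx].
  rewrite -leqNgt leq_eqVlt => /orP [/eqP h|h]; last exact: leq_ltn_trans IH h.
  by move: wx; rewrite (finj _ _ (val_inj h)) eqxx.
case: (step #|T|) => // h; exfalso.
have := ltn_ord (f (v #|T|)); lia.
Qed.

Theorem mainTheorem1 (T : finType) (e : rel T) :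
  simple_graph e -> is_copw e (Some 1) (degeneracy e).+1.
Proof.
move=> [sym irr]; split => //.
  apply: cops_strategy => //; rewrite /degeneracy; by case: ex_minnP.
move=> k k1 win.
case: (peel k irr [set: T]) => [[B [B0 HB]]|[s [us ms bs]]].
  by exfalso; apply: (robber_wins irr B0 HB win).
have sz : size s = #|T|.
  rewrite -(card_uniqP us); apply: eq_card => x; by rewrite ms !inE.
have hs : forall x, index x s < #|T| by move=> x; rewrite -sz index_mem ms inE.
suff : degenerate_at e k.-1.
  rewrite /degeneracy; case: ex_minnP => m _ hm /hm; lia.
apply/existsP; exists [ffun x => Ordinal (hs x)]; apply/andP; split.
  apply/injectiveP => x y; rewrite !ffunE => /(congr1 val) /=.
  by apply: (index_inj x); rewrite ms inE.
apply/forallP => x.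
have := bs x; rewrite ms inE => /(_ isT) h.
suff -> : #|[set u | e x u & [ffun x => Ordinal (hs x)] u < [ffun x => Ordinal (hs x)] x]|
  = #|[set u | e x u & index u s < index x s]| by lia.
by apply: eq_card => u; rewrite !inE !ffunE.
Qed.
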